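(* Let $n\in\mathbb{N}$, $N=\{1,\dots,n\}$, and let $(\mathbf v,d)=(v_1,\dots,v_n,d)\in\mathbb{N}^{n+1}$ with $v_i<d$ for all $i$. Write $\frac{v_i}{d}=\frac{s_i}{t_i}$ with $s_i,t_i\in\mathbb{N}$, $\gcd(s_i,t_i)=1$, put $w_i=v_i/d$, $d_{\mathbf w}=\operatorname{lcm}(t_j\mid j\in N)$, and for $k\in\mathbb{N}$ put $M(k)=\{j\in N\mid t_j\mid k\}$ and $\mu(k)=\prod_{j\in M(k)}\left(\frac1{w_j}-1\right)=\prod_{j\in M(k)}\frac{d-v_j}{v_j}$ (empty product $=1$). Let $D_{\mathbf w}=\prod_{j=1}^n\left(\frac1{s_j}\Lambda_{t_j}-\Lambda_1\right)\in\mathbb{Q}\langle S^{UR}\rangle$ and let $L(k)$, $k\in\mathbb{N}$, be its Lefschetz numbers. Let $\rho_{(\mathbf v,d)}(t)=t^{v_1+\dots+v_n}\prod_{j=1}^n\frac{t^{d-v_j}-1}{t^{v_j}-1}\in\mathbb{Q}(t)$. Then: (a) For all $k\in\mathbb{N}$: $M(k)=M(\gcd(k,d_{\mathbf w}))=\{j\in N\mid \frac{d}{\gcd(k,d_{\mathbf w})}\text{ divides } v_j\}$ and $\mu(k)=\mu(\gcd(k,d_{\mathbf w}))$. (b) For all $k\in\mathbb{N}$: $L(k)=L(\gcd(k,d_{\mathbf w}))=(-1)^{n-|M(k)|}\mu(k)\in\mathbb{Q}^*$. (c) If $(\mathbf v,d)$ satisfies condition $\overline{(C2)}$, then $\mu(k)\in\mathbb{N}$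 for all $k\in\mathbb{N}$. Moreover, $(\mathbf v,d)$ satisfies $\overline{(C2)}$ if and only if $\rho_{(\mathbf v,d)}\in\mathbb{Z}[t]$.
   Context: $S^{UR}\subset S^1$ is the set of all roots of unity; $\mathbb{Q}\langle S^{UR}\rangle$ is the group ring over $\mathbb{Q}$ of the multiplicative group $S^{UR}$, with elements $\sum_j b_j\langle\zeta_j\rangle$ ($b_j\in\mathbb{Q}$, $\zeta_j\in S^{UR}$) and product $\langle\zeta_1\rangle\langle\zeta_2\rangle=\langle\zeta_1\zeta_2\rangle$. For $m\in\mathbb{N}$, $\Lambda_m=\sum_{a=0}^{m-1}\langle e^{2\pi i a/m}\rangle$ (so $\Lambda_1=\langle1\rangle$ is the unit). The Lefschetz numbers of an element $\sum_j b_j\langle\zeta_j\rangle$ are $L(k)=\sum_j b_j\zeta_j^k\in\mathbb{C}$ for $k\in\mathbb{N}$. For $J\subset N$ and $c\in\mathbb{Z}$ let $(\mathbb{Z}^J)_c=\{\alpha\in\mathbb{Z}^n\mid \alpha_i=0\text{ for } i\notin J,\ \sum_i\alpha_iv_i=c\}$. Condition $\overline{(C2)}$: for every nonempty $J\subset N$ there exists $K\subset N$ with $|K|=|J|$ such that $(\mathbb{Z}^J)_{d-v_k}\neq\emptyset$ for all $k\in K$ (equivalently, $\gcd(v_j\mid j\in J)$ divides $d-v_k$ for all $k\in K$). *)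

(* Defs.v *)
From HB Require Import structures.
From mathcomp Require Import all_boot all_order all_algebra all_field.
Set Implicit Arguments. Unset Strict Implicit. Unset Printing Implicit Defensive.
Import Order.TTheory GRing.Theory Num.Theory.
Local Open Scope ring_scope.

(* e^{2 pi i / m}: n.-root z has minimal non-negative argument, so
   m.-root (-1) = e^{i pi / m} and its square is e^{2 pi i / m}. *)
Definition zeta (m : nat) : algC := (m.-root (-1)) ^+ 2.

(* Elements of the group ring Q<S^UR>, represented as formal sums
   sum_j b_j <zeta_j>, i.e. lists of pairs (b_j, zeta_j). *)
Definition grelt := seq (rat * algC).

Definition gr_one : grelt := [:: (1, 1)].
Definition gr_add (x y : grelt) : grelt := x ++ y.
Definition gr_scale (c : rat) (x : grelt) : grelt := [seq (c * p.1, p.2) | p <- x].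
Definition gr_opp (x : grelt) : grelt := gr_scale (-1) x.
Definition gr_mul (x y : grelt) : grelt :=
  [seq (p.1 * q.1, p.2 * q.2) | p <- x, q <- y].

Definition Lambda (m : nat) : grelt := [seq (1, zeta m ^+ a) | a <- iota 0 m].

Definition lefschetz (x : grelt) (k : nat) : algC :=
  \sum_(p <- x) ratr p.1 * p.2 ^+ k.

Section Data.
Variables (n : nat) (v : 'I_n -> nat) (d : nat).

Definition w (i : 'I_n) : rat := (v i)%:R / d%:R.
Definition s (i : 'I_n) : nat := `|numq (w i)|%N.
Definition t (i : 'I_n) : nat := `|denq (w i)|%N.

Definition d_w : nat := \big[lcmn/1%N]_(j < n) t j.

Definition M (k : nat) : {set 'I_n} := [set j : 'I_n | (t j %| k)%N].

Definition mu (k : nat) : rat := \prod_(j in M k) ((w j)^-1 - 1).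

Definition D_w : grelt :=
  \big[gr_mul/gr_one]_(j < n)
     gr_add (gr_scale (s j)%:R^-1 (Lambda (t j))) (gr_opp (Lambda 1)).

Definition L (k : nat) : algC := lefschetz D_w k.

Definition ZJ_nonempty (J : {set 'I_n}) (c : int) : Prop :=
  exists alpha : 'I_n -> int,
    (forall i, i \notin J -> alpha i = 0) /\ \sum_(i < n) alpha i * (v i)%:Z = c.

Definition C2bar : Prop :=
  forall J : {set 'I_n}, J != set0 ->
    exists K : {set 'I_n}, #|K| = #|J| /\
      forall k, k \in K -> ZJ_nonempty J (d%:Z - (v k)%:Z).

Definition rho : {fraction {poly rat}} :=
  FracField.tofrac ('X ^+ (\sum_(j < n) v j) * \prod_(j < n) ('X ^+ (d - v j) - 1))
  / FracField.tofrac (\prod_(j < n) ('X ^+ (v j) - 1 : {poly rat})).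

End Data.

(* Main.v *)
Require Import Defs.
From HB Require Import structures.
From mathcomp Require Import all_boot all_order all_algebra all_field.
From mathcomp Require Import ring lra zify.
Import Order.TTheory GRing.Theory Num.Theory.
Local Open Scope ring_scope.

Lemma norm1_sub (x : algC) : `|x| = 1 -> `|1 - x| ^+ 2 = 2 - 2 * 'Re x.
Proof.
move=> hx; rewrite normCK rmorphB rmorph1 ReE.
have hxx : x * x^* = 1 by rewrite -normCK hx expr1n.
have h2 : (2 : algC) != 0 by rewrite pnatr_eq0.
rewrite [2 * _]mulrC divfK //.
transitivity (1 - x - x^* + x * x^*); first by ring.
rewrite hxx; ring.
Qed.

Lemma sum_pow_prim (g : algC) q j : q.-primitive_root g ->
  \sum_(k < q) (g ^+ j) ^+ k = if (q %| j)%N then q%:R else 0.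
Proof.
move=> hg; rewrite (prim_order_dvd hg).
case: eqP => [->|/eqP hne].
  by rewrite (eq_bigr (fun _ => 1)) ?sumr_const ?card_ord // => k _; rewrite expr1n.
have h : (g ^+ j) ^+ q - 1 = 0 by rewrite exprAC (prim_expr_order hg) expr1n subrr.
move: h; rewrite subrX1 => /eqP; rewrite mulf_eq0 subr_eq0 (negbTE hne) /=.
by move/eqP.
Qed.

Lemma lemmaG (u : algC) (q : nat) : `|u| = 1 -> u != 1 -> (1 < q)%N ->
  exists x, x ^+ q = u /\ 'Re u < 'Re x.
Proof.
move=> hu hu1 hq.
have q0 : (0 < q)%N by apply: ltnW.
have [g hg] := C_prim_root_exists q0.
pose w := q.-root u.
have hw : w ^+ q = u by rewrite /w rootCK.
pose z (k : 'I_q) := w * g ^+ k.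
have hz k : z k ^+ q = u by rewrite /z exprMn exprAC (prim_expr_order hg) expr1n mulr1.
case: (boolP [exists k : 'I_q, 'Re u < 'Re (z k)]).
  by case/existsP=> k hk; exists (z k).
move/existsPn=> hall.
have hle k : 'Re (z k) <= 'Re u.
  by move: (hall k); rewrite real_ltNge ?Creal_Re // negbK.
have hnz k : `|z k| = 1.
  apply/eqP; rewrite -(pexpr_eq1 q0) // -normrX hz hu //.
have hz1 k : 1 - z k != 0.
  rewrite subr_eq0; apply: contra hu1 => /eqP h; by rewrite -(hz k) -h expr1n.
pose r k := (1 - u) / (1 - z k).
have hr k : r k = \sum_(j < q) z k ^+ j.
  rewrite /r; apply: (mulIf (hz1 k)); rewrite divfK //.
  have := subrX1 (z k) q; rewrite hz => h.
  apply: (can_inj (@opprK _)); rewrite opprB h; ring.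
have hsum : \sum_(k < q) r k = q%:R.
  rewrite (eq_bigr _ (fun k _ => hr k)) exchange_big /=.
  rewrite (bigD1 (Ordinal q0)) //=.
  have -> : \sum_(k < q) z k ^+ 0 = q%:R.
    by rewrite (eq_bigr (fun _ => 1)) ?sumr_const ?card_ord // => k _; rewrite expr0.
  rewrite big1 ?addr0 //.
  move=> j hj; rewrite /z (eq_bigr (fun k : 'I_q => w ^+ j * (g ^+ j) ^+ (val k))).
    rewrite -mulr_sumr sum_pow_prim // ifN ?mulr0 //.
    apply/negP => /(dvdn_leq _); case: j hj => [[|j]] //= hj _ /(_ isT).
    by rewrite leqNgt hj.
  by move=> k _; rewrite exprMn exprAC.
have hnr k : `|r k| <= 1.
  rewrite /r normf_div ler_pdivrMr ?normr_gt0 // mul1r.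
  rewrite -(ler_pXn2r (isT : (0 < 2)%N)) ?nnegrE ?normr_ge0 //.
  rewrite !norm1_sub // lerD2l lerN2; apply: ler_wpM2l => //; exact: hle.
have hsq k : 'Re (r k) ^+ 2 + 'Im (r k) ^+ 2 <= 1.
  rewrite -normC2_Re_Im -(expr1n _ 2) ler_pXn2r ?nnegrE ?normr_ge0 //.
have sq_ge0 (x : algC) : x \is Num.real -> 0 <= x ^+ 2.
  by move=> hx; rewrite -real_normK // exprn_ge0 // normr_ge0.
have hRle k : 'Re (r k) <= 1.
  apply: real_ler_normlW; first exact: Creal_Re.
  rewrite -(ler_pXn2r (isT : (0 < 2)%N)) ?nnegrE ?normr_ge0 // expr1n.
  rewrite real_normK ?Creal_Re //; apply: le_trans (hsq k).
  by rewrite lerDl sq_ge0 ?Creal_Im.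
have hRe k : 'Re (r k) = 1.
  have h0 : \sum_(k < q) (1 - 'Re (r k)) = 0.
    rewrite sumrB -raddf_sum hsum sumr_const card_ord.
    by apply/eqP; rewrite subr_eq0; apply/eqP; exact/esym/(Creal_ReP _ (realn _ q)).
  apply/eqP; rewrite eq_sym -subr_eq0; apply/eqP.
  by apply: (psumr_eq0P _ h0) => // i _; rewrite subr_ge0.
have hr1 k : r k = 1.
  have hIm : 'Im (r k) = 0.
    suff: 'Im (r k) ^+ 2 == 0 by rewrite expf_eq0 => /eqP.
    apply/eqP/le_anti; rewrite sq_ge0 ?Creal_Im // andbT.
    by move: (hsq k); rewrite hRe expr1n -lerBrDl subrr.
  by rewrite [r k]Crect hRe hIm mulr0 addr0.
have hzu k : z k = u.
  have := congr1 (fun t => t * (1 - z k)) (hr1 k); rewrite /r /= divfK // mul1r => h.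
  by apply: oppr_inj; apply: (addrI 1); rewrite h.
have w0 : w != 0.
  apply/eqP => h0; move: hw hu; rewrite h0 expr0n gtn_eqF // => <-.
  by rewrite normr0 => /eqP; rewrite eq_sym oner_eq0.
have := hzu (Ordinal q0); rewrite -(hzu (Ordinal hq)) /z /= expr0 mulr1 => /eqP.
rewrite -{1}(mulr1 w) (inj_eq (mulfI w0)) eq_sym -(prim_order_dvd hg).
by rewrite dvdn1 gtn_eqF.
Qed.

Lemma neg1_neq1 : (-1 : algC) != 1.
Proof. by rewrite -subr_eq0 -opprD oppr_eq0 (_ : 1 + 1 = 2%:R) // pnatr_eq0. Qed.

Lemma zeta_prim m : (0 < m)%N -> m.-primitive_root (zeta m).
Proof.
move=> m0; pose y := m.-root (-1 : algC).
have hy : y ^+ m = -1 by rewrite /y rootCK.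
have hz : zeta m ^+ m = 1 by rewrite /zeta exprAC hy sqrrN expr1n.
have [k hk km] := prim_order_exists m0 hz.
have k0 := prim_order_gt0 hk.
suff ekm : k = m by move: hk; rewrite ekm.
apply/eqP; rewrite eqn_leq (dvdn_leq m0 km) /=.
rewrite leqNgt; apply/negP => lkm.
pose q := (m %/ k)%N.
have emq : m = (q * k)%N by rewrite divnK.
have hq : (1 < q)%N.
  move: lkm; rewrite emq; clearbody q; nia.
have hyk : y ^+ k = -1.
  have : (y ^+ k) ^+ 2 == 1 by rewrite exprAC -(prim_expr_order hk) /zeta exprAC.
  rewrite sqrf_eq1 => /orP[/eqP h1|/eqP //].
  by move: hy; rewrite emq mulnC exprM h1 expr1n => /eqP; rewrite eq_sym (negbTE neg1_neq1).
have hny : `|y| = 1.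
  apply/eqP; rewrite -(pexpr_eq1 m0) // -normrX hy normrN normr1 //.
have hy1 : y != 1.
  by apply/eqP => h; move: hyk; rewrite h expr1n => /eqP; rewrite eq_sym (negbTE neg1_neq1).
have [x [hxq hxR]] := @lemmaG y q hny hy1 hq.
have hxn : x ^+ m = -1 by rewrite emq exprM hxq hyk.
have hmax : forall x' : algC, x' ^+ m = -1 -> 0 <= 'Im x' -> 'Re x' <= 'Re y.
  by move=> x' h1 h2; apply: rootC_Re_max.
have : 'Re x <= 'Re y.
  have [hI|hI] := boolP (0 <= 'Im x); first exact: hmax.
  rewrite -Re_conj; apply: hmax.
    by rewrite -rmorphXn /= hxn rmorphN1.
  rewrite Im_conj oppr_ge0; move: hI; rewrite real_leNgt ?Creal_Im ?realn //.
  by move/negP => h; apply/negP => /ltW.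
by move=> hle; move: hxR; rewrite real_ltNge ?Creal_Re // hle.
Qed.

Lemma lef_cat (x y : grelt) k : lefschetz (gr_add x y) k = lefschetz x k + lefschetz y k.
Proof. by rewrite /lefschetz /gr_add big_cat. Qed.

Lemma lef_scale c (x : grelt) k : lefschetz (gr_scale c x) k = ratr c * lefschetz x k.
Proof.
rewrite /lefschetz /gr_scale big_map mulr_sumr; apply: eq_bigr => p _ /=.
by rewrite rmorphM mulrA.
Qed.

Lemma lef_mul (x y : grelt) k : lefschetz (gr_mul x y) k = lefschetz x k * lefschetz y k.
Proof.
rewrite /lefschetz /gr_mul big_allpairs_dep mulr_suml; apply: eq_bigr => p _.
rewrite mulr_sumr; apply: eq_bigr => q _ /=.
by rewrite rmorphM exprMn; ring.
Qed.

Lemma lef_one k : lefschetz gr_one k = 1.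
Proof. by rewrite /lefschetz big_seq1 /= rmorph1 expr1n mulr1. Qed.

Lemma lef_Lambda m k : (0 < m)%N ->
  lefschetz (Lambda m) k = if (m %| k)%N then m%:R else 0.
Proof.
move=> m0; rewrite /lefschetz /Lambda big_map.
have -> : iota 0 m = index_iota 0 m by rewrite /index_iota subn0.
rewrite big_mkord -(sum_pow_prim _ _ k (zeta_prim m m0)); apply: eq_bigr => a _ /=.
by rewrite rmorph1 mul1r exprAC.
Qed.


Lemma card_set_sum (T : finType) (A : pred T) (P : pred T) :
  #|[set x | A x & P x]| = (\sum_(x | A x) (P x : nat))%N.
Proof.
rewrite cardsE -sum1_card big_mkcond [RHS]big_mkcond /=; apply: eq_bigr => x _.
by rewrite unfold_in; case: (A x); case: (P x).
Qed.

Lemma logn_prod (I : finType) (A : pred I) (f : I -> nat) p :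
  (forall i, (0 < f i)%N) ->
  logn p (\prod_(i | A i) f i) = (\sum_(i | A i) logn p (f i))%N.
Proof.
move=> hf.
suff : (0 < \prod_(i | A i) f i)%N /\ logn p (\prod_(i | A i) f i) = (\sum_(i | A i) logn p (f i))%N.
  by case.
apply: (big_ind2 (fun a b => (0 < a)%N /\ logn p a = b)).
- by rewrite logn1.
- move=> x1 x2 y1 y2 [h1 e1] [h2 e2]; split; first by rewrite muln_gt0 h1.
  by rewrite lognM // e1 e2.
- by move=> i _; split.
Qed.

Lemma logn_sum_bound p x B : prime p -> (0 < x)%N -> (x < B)%N ->
  logn p x = (\sum_(1 <= r < B) (p ^ r %| x))%N.
Proof.
move=> pp x0 xB; rewrite logn_count_dvd // [RHS](@big_cat_nat _ _ _ x) //=; last exact: ltnW.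
rewrite [X in _ = (_ + X)%N]big1_seq ?addn0 // => r.
rewrite mem_index_iota => /and3P[_ hr _]; apply/eqP; rewrite eqb0; apply/negP.
move/(dvdn_leq x0); rewrite leqNgt.
by rewrite (leq_ltn_trans hr (ltn_expl _ (prime_gt1 pp))).
Qed.

Lemma prod_dvd (I : finType) (A : pred I) (a b : I -> nat) B :
  (forall i, (0 < a i)%N) -> (forall i, (0 < b i)%N) ->
  (forall i, (a i < B)%N) -> (forall i, (b i < B)%N) ->
  (forall m, (0 < m)%N -> #|[set i | A i & (m %| b i)%N]| <= #|[set i | A i & (m %| a i)%N]|)%N ->
  (\prod_(i | A i) b i %| \prod_(i | A i) a i)%N.
Proof.
move=> ha hb haB hbB hc.
have pa : (0 < \prod_(i | A i) a i)%N by apply: prodn_gt0.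
have pb : (0 < \prod_(i | A i) b i)%N by apply: prodn_gt0.
apply/dvdn_partP => // p; rewrite mem_primes => /and3P[pp _ _].
rewrite p_part pfactor_dvdn // !logn_prod //.
rewrite (eq_bigr (fun i => \sum_(1 <= r < B) (p ^ r %| b i))%N); last first.
  by move=> i _; apply: logn_sum_bound.
rewrite [X in (_ <= X)%N](eq_bigr (fun i => \sum_(1 <= r < B) (p ^ r %| a i))%N); last first.
  by move=> i _; apply: logn_sum_bound.
rewrite exchange_big [X in (_ <= X)%N]exchange_big /=; apply: leq_sum => r _.
rewrite -!card_set_sum; apply: hc; by rewrite expn_gt0 prime_gt0.
Qed.

Lemma sub_card (T : finType) (A : {set T}) k : (k <= #|A|)%N ->
  exists B : {set T}, B \subset A /\ #|B| = k.
Proof.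
elim: k => [|k IH] hk; first by exists set0; rewrite sub0set cards0.
have [B [hBA hB]] := IH (ltnW hk).
have : B \proper A by rewrite properEcard hBA hB hk.
case/properP => _ [x hxA hxB]; exists (x |: B); split.
  by rewrite subUset sub1set hxA hBA.
by rewrite cardsU1 hxB hB.
Qed.


Lemma Xn1_prod (a B : nat) : (0 < a)%N -> (a < B)%N ->
  ('X^a - 1 : {poly int}) = \prod_(m < B) 'Phi_m ^+ (m %| a)%N.
Proof.
move=> a0 aB.
transitivity (\prod_(m < B | (m %| a)%N) 'Phi_m).
  rewrite -(prod_Cyclotomic a0) -(big_mkord (fun m => (m %| a)%N) (fun m => 'Phi_m)).
  rewrite -[RHS]big_filter; apply: perm_big; apply: uniq_perm.
  - exact: divisors_uniq.
  - by rewrite filter_uniq // iota_uniq.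
  move=> m; rewrite mem_filter mem_index_iota -dvdn_divisors //.
  case hm: (m %| a)%N => //=.
  by rewrite (leq_ltn_trans (dvdn_leq a0 hm) aB).
rewrite [RHS](bigID (fun m : 'I_B => (m %| a)%N)) /=.
rewrite [X in _ = _ * X]big1 ?mulr1; last by move=> m /negbTE ->; rewrite expr0.
by apply: eq_bigr => m ->; rewrite expr1.
Qed.


Lemma card_set_sum1 (T : finType) (P : pred T) :
  #|[set x | P x]| = (\sum_x (P x : nat))%N.
Proof.
rewrite cardsE -sum1_card big_mkcond /=; apply: eq_bigr => x _.
by rewrite unfold_in; case: (P x).
Qed.

Section Data.
Variables (n : nat) (v : 'I_n -> nat) (d : nat).
Hypothesis hd : (0 < d)%N.
Hypothesis hv0 : forall i, (0 < v i)%N.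
Hypothesis hvd : forall i, (v i < d)%N.

Lemma w_gt0 j : 0 < w v d j.
Proof. by rewrite /w divr_gt0 // ltr0n. Qed.

Lemma w_lt1 j : w v d j < 1.
Proof. by rewrite /w ltr_pdivrMr ?ltr0n // mul1r ltr_nat. Qed.

Lemma s_eq j : ((s v d j)%:R : rat) = (numq (w v d j))%:~R.
Proof. by rewrite /s natr_absz ger0_norm // numq_ge0 ltW // w_gt0. Qed.

Lemma t_eq j : ((t v d j)%:R : rat) = (denq (w v d j))%:~R.
Proof. by rewrite /t natr_absz ger0_norm // ltW // denq_gt0. Qed.

Lemma w_st j : w v d j = (s v d j)%:R / (t v d j)%:R.
Proof. by rewrite s_eq t_eq divq_num_den. Qed.

Lemma t_gt0 j : (0 < t v d j)%N.
Proof. by rewrite -(ltr0n rat) t_eq ltr0z denq_gt0. Qed.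

Lemma s_gt0 j : (0 < s v d j)%N.
Proof. by rewrite -(ltr0n rat) s_eq ltr0z numq_gt0 w_gt0. Qed.

Lemma cop_st j : coprime (s v d j) (t v d j).
Proof. exact: coprime_num_den. Qed.

Lemma vt_sd j : (v j * t v d j = s v d j * d)%N.
Proof.
apply/eqP; rewrite -(eqr_nat rat) !natrM -eqr_div ?pnatr_eq0 -?lt0n ?t_gt0 //.
by rewrite -w_st.
Qed.

Lemma cop_ts j : coprime (t v d j) (s v d j).
Proof. by rewrite coprime_sym cop_st. Qed.

Lemma t_dvd_d j : (t v d j %| d)%N.
Proof. by rewrite -(Gauss_dvdr d (cop_ts j)) -vt_sd dvdn_mull. Qed.

Lemma t_dvd_iff j g : (0 < g)%N -> (g %| d)%N ->
  (t v d j %| g)%N = (d %/ g %| v j)%N.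
Proof.
move=> g0 gd; rewrite -[(d %/ g %| v j)%N](dvdn_pmul2r g0) divnK //.
rewrite -[(d %| _)%N](dvdn_pmul2r (t_gt0 j)).
rewrite (_ : (v j * g * t v d j = d * (s v d j * g))%N); last first.
  by rewrite mulnAC vt_sd; ring.
by rewrite dvdn_pmul2l // Gauss_dvdr // cop_ts.
Qed.

Lemma t_dvd_dw j : (t v d j %| d_w v d)%N.
Proof. exact: (biglcmn_sup j). Qed.

Lemma dw_dvd_d : (d_w v d %| d)%N.
Proof. by apply/dvdn_biglcmP => j _; exact: t_dvd_d. Qed.

Lemma M_gcd k : M v d k = M v d (gcdn k (d_w v d)).
Proof. by apply/setP => j; rewrite !inE dvdn_gcd t_dvd_dw andbT. Qed.

Lemma M_char k : (0 < k)%N ->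
  M v d (gcdn k (d_w v d)) = [set j : 'I_n | (d %/ gcdn k (d_w v d) %| v j)%N].
Proof.
move=> k0; apply/setP => j; rewrite !inE t_dvd_iff //.
  by rewrite gcdn_gt0 k0.
exact: dvdn_trans (dvdn_gcdr _ _) dw_dvd_d.
Qed.


Lemma L_prod k : L v d k =
  \prod_(j < n) ratr (if (t v d j %| k)%N then (w v d j)^-1 - 1 else -1).
Proof.
rewrite /L /D_w (big_morph _ (fun x y => lef_mul x y k) (lef_one k)).
apply: eq_bigr => j _.
rewrite lef_cat lef_scale /gr_opp lef_scale lef_Lambda ?t_gt0 // lef_Lambda // dvd1n.
case: ifP => _.
  rewrite w_st invf_div rmorphB rmorph1 rmorphM rmorphN1 !fmorphV !rmorph_nat mulr1.
  by ring.
by rewrite mulr0 add0r rmorphN1 mulr1.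
Qed.

Lemma L_formula k : L v d k = ratr ((-1) ^+ (n - #|M v d k|) * mu v d k).
Proof.
rewrite L_prod -rmorph_prod; congr ratr.
rewrite (bigID (fun j => j \in M v d k)) /= mulrC; congr (_ * _).
  rewrite (eq_bigr (fun _ => -1)); last by move=> j; rewrite inE => /negbTE ->.
  rewrite prodr_const; congr (_ ^+ _).
  have hc := cardC (M v d k); rewrite card_ord in hc.
  apply: (@addnI #|M v d k|); rewrite subnKC; first exact: hc.
  by have := max_card (mem (M v d k)); rewrite card_ord.
by apply: eq_bigr => j; rewrite inE => ->.
Qed.


Lemma mu_neq0 k : mu v d k != 0.
Proof.
apply/prodf_neq0 => j _; rewrite subr_eq0 invr_eq1.
by rewrite lt_eqF // w_lt1.
Qed.

Lemma C2_count : C2bar v d -> forall m, (0 < m)%N ->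
  (#|[set j | (m %| v j)%N]| <= #|[set j | (m %| d - v j)%N]|)%N.
Proof.
move=> hC m m0; set J := [set j | (m %| v j)%N].
have [->|hJ] := eqVneq J set0; first by rewrite cards0.
have [K [hK hKz]] := hC J hJ.
rewrite -hK; apply: subset_leq_card; apply/subsetP => k hk; rewrite inE.
have [alpha [h0 hs]] := hKz k hk.
have : (m%:Z %| d%:Z - (v k)%:Z)%Z.
  rewrite -hs; apply: rpred_sum => i _.
  have [hi|hi] := boolP (i \in J).
    by apply: dvdz_mull; move: hi; rewrite inE.
  by rewrite h0 // mul0r rpred0.
rewrite (subzn (ltnW (hvd k))); exact.
Qed.

Lemma bezout_seq (s0 : seq 'I_n) : exists alpha : 'I_n -> int,
  (forall i, i \notin s0 -> alpha i = 0) /\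
  \sum_(i < n) alpha i * (v i)%:Z = (\big[gcdn/0]_(j <- s0) v j)%N%:Z.
Proof.
elim: s0 => [|a s0 [al [h0 hs]]].
  exists (fun _ => 0); split => //; rewrite big_nil big1 // => i _; rewrite mul0r.
rewrite big_cons.
have [u [w0 hb]] := Bezoutz (v a)%:Z (\big[gcdn/0]_(j <- s0) v j)%N%:Z.
exists (fun i => (if i == a then u else 0) + w0 * al i); split.
  move=> i; rewrite inE negb_or => /andP[hia his].
  by rewrite (negbTE hia) h0 // mulr0 addr0.
rewrite (_ : ((gcdn _ _)%:Z) = gcdz (v a)%:Z (\big[gcdn/0]_(j <- s0) v j)%N%:Z) //.
rewrite -hb -hs (eq_bigr _ (fun i _ => mulrDl _ _ _)) big_split /=; congr (_ + _).
  rewrite (bigD1 a) //= eqxx big1 ?addr0 // => i /negbTE ->; by rewrite mul0r.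
by rewrite mulr_sumr; apply: eq_bigr => i _; rewrite mulrA.
Qed.

Lemma count_C2 : (forall m, (0 < m)%N ->
  (#|[set j | (m %| v j)%N]| <= #|[set j | (m %| d - v j)%N]|)%N) -> C2bar v d.
Proof.
move=> hcnt J hJ; set g := (\big[gcdn/0]_(j in J) v j)%N.
have [j0 hj0] := set0Pn J hJ.
have hgv j : j \in J -> (g %| v j)%N by move=> hj; apply: (biggcdn_inf j).
have g0 : (0 < g)%N.
  rewrite lt0n; apply/negP => /eqP g0; move: (hgv j0 hj0) (hv0 j0).
  by rewrite g0 dvd0n => /eqP ->.
have hle : (#|J| <= #|[set j | (g %| d - v j)%N]|)%N.
  apply: leq_trans (hcnt g g0); apply: subset_leq_card; apply/subsetP => j hj.
  by rewrite inE hgv.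
have [K [hKs hK]] := sub_card _ _ _ hle; exists K; split => // k hk.
have hgk : (g %| d - v k)%N by move: (subsetP hKs k hk); rewrite inE.
have [al [h0 hs]] := bezout_seq (enum J).
exists (fun i => ((d - v k) %/ g)%N%:Z * al i); split.
  by move=> i hi; rewrite h0 ?mulr0 // mem_enum.
rewrite (eq_bigr (fun i => ((d - v k) %/ g)%N%:Z * (al i * (v i)%:Z))); last first.
  by move=> i _; rewrite mulrA.
rewrite -mulr_sumr hs big_enum /= -/g (subzn (ltnW (hvd k))) -PoszM divnK //.
Qed.

Lemma mu_nat k : (0 < k)%N -> C2bar v d -> exists m : nat, mu v d k = m%:R.
Proof.
move=> k0 hC; set g := gcdn k (d_w v d); set e := (d %/ g)%N.
have g0 : (0 < g)%N by rewrite gcdn_gt0 k0.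
have gd : (g %| d)%N by exact: dvdn_trans (dvdn_gcdr _ _) dw_dvd_d.
have ed : (e %| d)%N by apply: dvdn_div.
have e0 : (0 < e)%N by rewrite divn_gt0 // dvdn_leq.
rewrite /mu M_gcd (M_char k k0) -/g -/e.
set A := [set j | (e %| v j)%N].
have hdiv : (\prod_(j in A) v j %| \prod_(j in A) (d - v j))%N.
  apply: (@prod_dvd _ _ _ _ d).
  - by move=> i; rewrite subn_gt0.
  - exact: hv0.
  - by move=> i; rewrite ltn_subrL hv0.
  - exact: hvd.
  move=> m m0.
  have -> : [set i | i \in A & (m %| v i)%N] = [set i | (lcmn e m %| v i)%N].
    by apply/setP => i; rewrite !inE dvdn_lcm.
  have -> : [set i | i \in A & (m %| d - v i)%N] = [set i | (lcmn e m %| d - v i)%N].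
    by apply/setP => i; rewrite !inE dvdn_lcm (dvdn_subr (ltnW (hvd i)) ed).
  by apply: C2_count => //; rewrite lcmn_gt0 e0.
exists (\prod_(j in A) (d - v j) %/ \prod_(j in A) v j)%N.
rewrite natq_div // !natr_prod -prodf_div; apply: eq_bigr => j _.
rewrite /w invf_div (natrB _ (ltnW (hvd j))) mulrBl divff // pnatr_eq0 -lt0n hv0 //.
Qed.


Definition Nz : {poly int} :=
  'X^(\sum_(j < n) v j) * \prod_(j < n) ('X^(d - v j) - 1).
Definition Dz : {poly int} := \prod_(j < n) ('X^(v j) - 1).

Lemma prod_cyc (f : 'I_n -> nat) : (forall j, (0 < f j)%N) -> (forall j, (f j < d)%N) ->
  \prod_(j < n) ('X^(f j) - 1 : {poly int}) =
  \prod_(m < d) 'Phi_m ^+ (\sum_(j < n) (m %| f j))%N.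
Proof.
move=> h0 h1; rewrite (eq_bigr _ (fun j _ => Xn1_prod _ _ (h0 j) (h1 j))) exchange_big /=.
by apply: eq_bigr => m _; exact: prodrXr.
Qed.

Lemma Dz_neq0 : Dz != 0.
Proof.
apply/prodf_neq0 => j _; rewrite -size_poly_eq0 -polyC1 size_XnsubC //.
Qed.

Lemma rho_eqZ : rho v d = FracField.tofrac (map_poly intr Nz : {poly rat}) /
  FracField.tofrac (map_poly intr Dz : {poly rat}).
Proof.
rewrite /rho /Nz /Dz; congr (FracField.tofrac _ / FracField.tofrac _).
  rewrite rmorphM /= rmorphXn /= map_polyX rmorph_prod; congr (_ * _).
  by apply: eq_bigr => j _; rewrite rmorphB /= rmorphXn /= map_polyX rmorph1.
rewrite rmorph_prod; apply: eq_bigr => j _.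
by rewrite rmorphB /= rmorphXn /= map_polyX rmorph1.
Qed.

Lemma rho_iff : (exists p : {poly int}, rho v d = FracField.tofrac (map_poly intr p : {poly rat}))
  <-> exists p : {poly int}, Nz = p * Dz.
Proof.
have mD : (map_poly intr Dz : {poly rat}) != 0.
  by rewrite map_poly_eq0_id0 ?Dz_neq0 // intr_eq0 lead_coef_eq0 Dz_neq0.
have tD : FracField.tofrac (map_poly intr Dz : {poly rat}) != 0 by rewrite tofrac_eq0.
have hinj : injective (map_poly (intr : int -> rat)).
  by apply: map_inj_poly; [exact: intr_inj | exact: rmorph0].
rewrite rho_eqZ; split => [[p hp]|[p hp]]; exists p.
  apply: hinj; apply/eqP; rewrite -tofrac_eq; apply/eqP.
  have -> : map_poly intr (p * Dz) = map_poly (intr : int -> rat) p * map_poly intr Dz by rewrite rmorphM.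
  by rewrite [X in _ = X]tofracM -hp divfK.
rewrite hp rmorphM /= tofracM mulfK //.
Qed.


Lemma CC_poly : (forall m, (0 < m)%N ->
  (#|[set j | (m %| v j)%N]| <= #|[set j | (m %| d - v j)%N]|)%N) ->
  exists p : {poly int}, Nz = p * Dz.
Proof.
move=> hc.
have h0 j : (0 < d - v j)%N by rewrite subn_gt0.
have h1 j : (d - v j < d)%N by rewrite ltn_subrL hv0.
have hcnt (m : 'I_d) : (\sum_(j < n) (m %| v j) <= \sum_(j < n) (m %| d - v j))%N.
  have [m0|m0] := posnP m.
    rewrite big1 // => j _; rewrite m0 dvd0n.
    by case: (v j) (hv0 j).
  by rewrite -!card_set_sum1; exact: hc.
exists ('X^(\sum_(j < n) (v j : nat)) * \prod_(m < d)
  'Phi_m ^+ (\sum_(j < n) (m %| d - v j) - \sum_(j < n) (m %| v j))%N).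
rewrite /Nz /Dz (@prod_cyc (fun j => (d - v j)%N) h0 h1) (@prod_cyc v hv0 hvd).
rewrite -mulrA -big_split /=; congr (_ * _); apply: eq_bigr => m _.
by rewrite -exprD subnK // hcnt.
Qed.

Lemma poly_CC : (exists p : {poly int}, Nz = p * Dz) ->
  (forall m, (0 < m)%N ->
  (#|[set j | (m %| v j)%N]| <= #|[set j | (m %| d - v j)%N]|)%N).
Proof.
move=> [p hp] m m0.
rewrite !card_set_sum1.
have [hmd|hmd] := ltnP m d; last first.
  rewrite big1 // => j _; apply/eqP; rewrite eqb0; apply/negP.
  move/(dvdn_leq (hv0 j)); rewrite leqNgt.
  by rewrite (leq_trans (hvd j) hmd).
rewrite leqNgt; apply/negP => hlt.
have h0 j : (0 < d - v j)%N by rewrite subn_gt0.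
have h1 j : (d - v j < d)%N by rewrite ltn_subrL hv0.
pose mo := Ordinal hmd.
pose c (i : nat) := (\sum_(j < n) (i %| v j))%N.
pose c' (i : nat) := (\sum_(j < n) (i %| d - v j))%N.
pose A := \prod_(i < d | i != mo) 'Phi_i ^+ c i.
pose A' := \prod_(i < d | i != mo) 'Phi_i ^+ c' i.
have hN : Nz = 'X^(\sum_(j < n) v j) * ('Phi_m ^+ c' m * A').
  by rewrite /Nz (@prod_cyc (fun j => (d - v j)%N) h0 h1) (bigD1 mo).
have hD : Dz = 'Phi_m ^+ c m * A.
  by rewrite /Dz (@prod_cyc v hv0 hvd) (bigD1 mo).
have hc : c m = (c' m + (c m - c' m))%N by rewrite subnKC // ltnW.
have hPhi : 'Phi_m ^+ c' m != 0 by rewrite expf_neq0 // monic_neq0 // Cyclotomic_monic.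
have key : 'X^(\sum_(j < n) v j) * A' = p * 'Phi_m ^+ (c m - c' m) * A.
  apply: (mulfI hPhi).
  have -> : 'Phi_m ^+ c' m * ('X^(\sum_(j < n) v j) * A') = Nz by rewrite hN mulrCA.
  by rewrite hp hD {1}hc exprD !mulrA [_ * p]mulrC.
have [z hz] := C_prim_root_exists m0.
have := congr1 (fun P => (map_poly (intr : int -> algC) P).[z]) key.
rewrite /= !rmorphM /= !rmorphXn /= map_polyX !hornerM !horner_exp hornerX (Cintr_Cyclotomic hz).
have -> : (cyclotomic z m).[z] = 0 by apply/rootP; rewrite root_cyclotomic.
rewrite expr0n subn_eq0 leqNgt hlt /= mulr0 mul0r.
apply/eqP; rewrite mulf_neq0 //.
  by rewrite expf_neq0 // (prim_root_eq0 hz) -lt0n.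
rewrite /A' rmorph_prod horner_prod; apply/prodf_neq0 => i hi.
rewrite rmorphXn horner_exp expf_neq0 //.
have [i0|i0] := posnP i.
  by rewrite i0 Cyclotomic0 rmorph1 -polyC1 hornerC oner_neq0.
have [z' hz'] := C_prim_root_exists i0.
rewrite -[X in X.[z]]/(map_poly (intr : int -> algC) 'Phi_i) (Cintr_Cyclotomic hz') -rootE root_cyclotomic //.
apply/negP => hzi; move: hi; rewrite -(inj_eq val_inj) /=; apply/negP/negPn.
by rewrite eqn_dvd (prim_order_dvd hzi) (prim_order_dvd hz) (prim_expr_order hz) (prim_expr_order hzi) eqxx.
Qed.

Lemma main_sec :
  (forall k : nat, (0 < k)%N ->
     M v d k = M v d (gcdn k (d_w v d)) /\
     M v d (gcdn k (d_w v d)) = [set j : 'I_n | (d %/ gcdn k (d_w v d) %| v j)%N] /\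
     mu v d k = mu v d (gcdn k (d_w v d))) /\
  (forall k : nat, (0 < k)%N ->
     L v d k = L v d (gcdn k (d_w v d)) /\
     L v d k = ratr ((-1) ^+ (n - #|M v d k|) * mu v d k) /\
     (-1) ^+ (n - #|M v d k|) * mu v d k != 0) /\
  (C2bar v d -> forall k : nat, (0 < k)%N -> exists m : nat, mu v d k = m%:R) /\
  (C2bar v d <-> exists p : {poly int}, rho v d = FracField.tofrac (map_poly intr p : {poly rat})).
Proof using hd hv0 hvd.
split.
  move=> k k0; split; first exact: M_gcd.
  split; first exact: M_char.
  by rewrite /mu -M_gcd.
split.
  move=> k k0; split; first by rewrite !L_formula /mu -M_gcd.
  split; first exact: L_formula.
  by rewrite mulf_neq0 ?signr_eq0 ?mu_neq0.
split; first by move=> hC k k0; exact: mu_nat.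
split.
  by move=> hC; apply/rho_iff; apply: CC_poly; exact: C2_count.
by move/rho_iff => h; apply: count_C2; exact: poly_CC.
Qed.

End Data.

Theorem lemma3p7 (n : nat) (v : 'I_n -> nat) (d : nat)
  (hd : (0 < d)%N) (hv0 : forall i, (0 < v i)%N) (hvd : forall i, (v i < d)%N) :
  (* (a) *)
  (forall k : nat, (0 < k)%N ->
     M v d k = M v d (gcdn k (d_w v d)) /\
     M v d (gcdn k (d_w v d)) = [set j : 'I_n | (d %/ gcdn k (d_w v d) %| v j)%N] /\
     mu v d k = mu v d (gcdn k (d_w v d))) /\
  (* (b) *)
  (forall k : nat, (0 < k)%N ->
     L v d k = L v d (gcdn k (d_w v d)) /\
     L v d k = ratr ((-1) ^+ (n - #|M v d k|) * mu v d k) /\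
     (-1) ^+ (n - #|M v d k|) * mu v d k != 0) /\
  (* (c) *)
  (C2bar v d -> forall k : nat, (0 < k)%N -> exists m : nat, mu v d k = m%:R) /\
  (C2bar v d <-> exists p : {poly int}, rho v d = FracField.tofrac (map_poly intr p : {poly rat})).
Proof. exact: (@main_sec n v d hd hv0 hvd). Qed.
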